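(* Let $\eta>0$, $\widetilde{x}_1\in C$, and let $(\widehat{x}_t^* )_{t\ge 1}$ be an arbitrary sequence in $H$. Run Optimistic Greedy Projection (OGP): for $t=1,2,\dots$, $$\widetilde{x}_{t+1}=P_C(\widetilde{x}_t-\eta x_t^* ),\quad x_t^*\in\partial\varphi_t(x_t),\qquad x_{t+1}=P_C(\widetilde{x}_{t+1}-\eta\widehat{x}_{t+1}^* ),$$ where $x_1\in C$ is the initial played point ($x_1=P_C(\widetilde x_1-\eta\widehat x_1^* )$). Then for every $T\ge1$ and every reference sequence $z_1,\dots,z_T\in C$, $$\sum_{t=1}^T\varphi_t(x_t)-\sum_{t=1}^T\varphi_t(z_t)\le \frac{\rho^2}{2\eta}+\frac{\rho}{\eta}\sum_{t=2}^T\|z_t-z_{t-1}\|+\frac{\eta}{2}\sum_{t=1}^T\|x_t^*-\widehat{x}_t^*\|^2-\frac{1}{2\eta}\sum_{t=1}^T\|x_t-\widetilde{x}_t\|^2 .$$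
   Context: $H$ is a real Hilbert space with inner product $\langle\cdot,\cdot\rangle$; $C\subset H$ is nonempty, closed and convex with diameter $\rho=\sup_{x,y\in C}\|x-y\|<\infty$; $P_C$ denotes the metric projection onto $C$. For each round $t$, $\varphi_t:H\to(-\infty,+\infty]$ is a convex function with $C\subset\operatorname{dom}\partial\varphi_t$ (the loss chosen by an adversary, possibly depending on past play), and $\partial$ denotes the subdifferential. *)

(* Defs.v *)
From HB Require Import structures.
From mathcomp Require Import all_boot all_order all_algebra.
From mathcomp Require Import all_classical all_reals.
Set Implicit Arguments. Unset Strict Implicit. Unset Printing Implicit Defensive.
Import Order.TTheory GRing.Theory Num.Theory.
Local Open Scope classical_set_scope.
Local Open Scope ring_scope.

Definition inner_product (R : realType) (H : lmodType R) (ip : H -> H -> R) :=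
  [/\ (forall x y, ip x y = ip y x),
      (forall a x y z, ip (a *: x + y) z = a * ip x z + ip y z),
      (forall x, 0 <= ip x x) &
      (forall x, ip x x = 0 -> x = 0)].

Definition inorm (R : realType) (H : lmodType R) (ip : H -> H -> R) (x : H) : R :=
  Num.sqrt (ip x x).

Definition hilbert (R : realType) (H : lmodType R) (ip : H -> H -> R) :=
  inner_product ip /\
  forall u : nat -> H,
    (forall e : R, 0 < e -> exists N : nat, forall m n : nat, (N <= m)%N -> (N <= n)%N ->
        inorm ip (u m - u n) < e) ->
    exists l : H, forall e : R, 0 < e -> exists N : nat, forall n : nat, (N <= n)%N ->
        inorm ip (u n - l) < e.

Definition convex_set (R : realType) (H : lmodType R) (C : set H) :=
  forall x y (l : R), C x -> C y -> 0 <= l <= 1 -> C (l *: x + (1 - l) *: y).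

Definition norm_closed (R : realType) (H : lmodType R) (ip : H -> H -> R) (C : set H) :=
  forall (u : nat -> H) (l : H), (forall n, C (u n)) ->
    (forall e : R, 0 < e -> exists N : nat, forall n : nat, (N <= n)%N -> inorm ip (u n - l) < e) ->
    C l.

Definition bounded_diam (R : realType) (H : lmodType R) (ip : H -> H -> R) (C : set H) :=
  exists M : R, forall x y, C x -> C y -> inorm ip (x - y) <= M.

Definition diameter (R : realType) (H : lmodType R) (ip : H -> H -> R) (C : set H) : R :=
  sup [set r | exists x y, [/\ C x, C y & r = inorm ip (x - y)]].

Definition is_proj (R : realType) (H : lmodType R) (ip : H -> H -> R) (C : set H) (x p : H) :=
  C p /\ forall y, C y -> inorm ip (x - p) <= inorm ip (x - y).

Definition convex_fun (R : realType) (H : lmodType R) (f : H -> \bar R) :=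
  (forall x : H, f x != -oo%E) /\
  forall (x y : H) (l : R), 0 < l < 1 ->
    (f (l *: x + (1 - l) *: y)%R <= l%:E * f x + (1 - l)%:E * f y)%E.

Definition subgrad (R : realType) (H : lmodType R) (ip : H -> H -> R) (f : H -> \bar R) (x s : H) :=
  f x \is a fin_num /\ forall y : H, (f x + (ip s (y - x)%R)%:E <= f y)%E.

Definition in_dom_subdiff (R : realType) (H : lmodType R) (ip : H -> H -> R) (f : H -> \bar R) (x : H) :=
  exists s, subgrad ip f x s.

(* Main.v *)
Require Import Defs.
From HB Require Import structures.
From mathcomp Require Import all_boot all_order all_algebra.
From mathcomp Require Import all_classical all_reals.
From mathcomp Require Import ring lra.
Import Order.TTheory GRing.Theory Num.Theory.
Local Open Scope classical_set_scope.
Local Open Scope ring_scope.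

Lemma ip0l {R : realType} {H : lmodType R} {ip : H -> H -> R} (hip : inner_product ip) z :
  ip 0 z = 0.
Proof. case: hip => _ hl _ _; have := hl 1 0 0 z. rewrite scale1r addr0 mul1r => h; lra. Qed.

Lemma ipDl {R : realType} {H : lmodType R} {ip : H -> H -> R} (hip : inner_product ip) x y z :
  ip (x + y) z = ip x z + ip y z.
Proof. case: hip => _ hl _ _; have := hl 1 x y z. by rewrite scale1r mul1r. Qed.

Lemma ipZl {R : realType} {H : lmodType R} {ip : H -> H -> R} (hip : inner_product ip) a x z :
  ip (a *: x) z = a * ip x z.
Proof. have := hip; case=> _ hl _ _; have := hl a x 0 z. by rewrite addr0 ip0l // addr0. Qed.

Lemma ipNl {R : realType} {H : lmodType R} {ip : H -> H -> R} (hip : inner_product ip) x z :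
  ip (- x) z = - ip x z.
Proof. by rewrite -scaleN1r ipZl // mulN1r. Qed.

Lemma ipBl {R : realType} {H : lmodType R} {ip : H -> H -> R} (hip : inner_product ip) x y z :
  ip (x - y) z = ip x z - ip y z.
Proof. by rewrite ipDl // ipNl. Qed.

Lemma ipC {R : realType} {H : lmodType R} {ip : H -> H -> R} (hip : inner_product ip) x y :
  ip x y = ip y x.
Proof. by case: hip. Qed.

Lemma ipDr {R : realType} {H : lmodType R} {ip : H -> H -> R} (hip : inner_product ip) x y z :
  ip z (x + y) = ip z x + ip z y.
Proof. by rewrite (ipC hip) ipDl // !(ipC hip z). Qed.

Lemma ipZr {R : realType} {H : lmodType R} {ip : H -> H -> R} (hip : inner_product ip) a x z :
  ip z (a *: x) = a * ip z x.
Proof. by rewrite (ipC hip) ipZl // (ipC hip z). Qed.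

Lemma ipNr {R : realType} {H : lmodType R} {ip : H -> H -> R} (hip : inner_product ip) x z :
  ip z (- x) = - ip z x.
Proof. by rewrite (ipC hip) ipNl // (ipC hip z). Qed.

Lemma ipBr {R : realType} {H : lmodType R} {ip : H -> H -> R} (hip : inner_product ip) x y z :
  ip z (x - y) = ip z x - ip z y.
Proof. by rewrite ipDr // ipNr. Qed.

Lemma ipge0 {R : realType} {H : lmodType R} {ip : H -> H -> R} (hip : inner_product ip) x :
  0 <= ip x x.
Proof. by case: hip. Qed.

Lemma normsq {R : realType} {H : lmodType R} {ip : H -> H -> R} (hip : inner_product ip) x :
  inorm ip x ^+ 2 = ip x x.
Proof. by rewrite /inorm sqr_sqrtr // ipge0. Qed.

Lemma inorm_ge0 {R : realType} {H : lmodType R} {ip : H -> H -> R} x :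
  0 <= inorm ip x.
Proof. exact: sqrtr_ge0. Qed.

Ltac ipexp hip := repeat first [rewrite (ipBl hip) | rewrite (ipDl hip) | rewrite (ipZl hip) | rewrite (ipNl hip) | rewrite (ipBr hip) | rewrite (ipDr hip) | rewrite (ipZr hip) | rewrite (ipNr hip)].

Ltac ipsym ip hip := repeat match goal with |- context [ip ?a ?b] =>
  match goal with |- context [ip b a] =>
    tryif constr_eq a b then fail else rewrite (ipC hip b a) end end.

Lemma ip_eq0 {R : realType} {H : lmodType R} {ip : H -> H -> R} (hip : inner_product ip) x :
  inorm ip x = 0 -> x = 0.
Proof. move=> h; have := hip; case=> _ _ _; apply; by rewrite -(normsq hip) h expr0n. Qed.

Lemma CS {R : realType} {H : lmodType R} {ip : H -> H -> R} (hip : inner_product ip) u v :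
  ip u v <= inorm ip u * inorm ip v.
Proof.
set a := inorm ip u; set b := inorm ip v.
have ha : 0 <= a := inorm_ge0 _. have hb : 0 <= b := inorm_ge0 _.
have hu : ip u u = a ^+ 2 by rewrite normsq.
have hv : ip v v = b ^+ 2 by rewrite normsq.
have [a0|] := eqVneq a 0.
  by rewrite (ip_eq0 hip u a0) ip0l // a0 mul0r.
have [b0|] := eqVneq b 0.
  by rewrite (ip_eq0 hip v b0) (ipC hip) ip0l // b0 mulr0.
move=> bn0 an0.
have hab : 0 < a * b by rewrite mulr_gt0 // lt_def ?an0 ?bn0.
have := ipge0 hip (b *: u - a *: v).
ipexp hip. rewrite (ipC hip v u) hu hv => h.
have : a * b * (2 * ip u v) <= a * b * (2 * (a * b)) by nra.
rewrite ler_pM2l // => h2; lra.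
Qed.

Lemma VI {R : realType} {H : lmodType R} {ip : H -> H -> R} (hip : inner_product ip) C x p y :
  convex_set C -> is_proj ip C x p -> C y -> ip (x - p) (y - p) <= 0.
Proof.
move=> cC [Cp hp] Cy.
set c := ip (x - p) (y - p); set d := ip (y - p) (y - p).
have hd : 0 <= d := ipge0 hip _.
rewrite leNgt; apply/negP => hc.
set l := c / (c + d).
have cd : 0 < c + d by lra.
have l0 : 0 < l by rewrite divr_gt0.
have l1 : l <= 1 by rewrite ler_pdivrMr // mul1r; lra.
have hl : 0 <= l <= 1 by rewrite (ltW l0) l1.
have Cq := cC y p l Cy Cp hl.
have := hp _ Cq => h.
have h2 := ler_pM (inorm_ge0 _) (inorm_ge0 _) h h.
rewrite -!expr2 !(normsq hip) in h2.
have e : ip (x - (l *: y + (1 - l) *: p)) (x - (l *: y + (1 - l) *: p)) =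
   ip (x - p) (x - p) - 2 * l * c + l ^+ 2 * d.
  rewrite /c /d; ipexp hip; ipsym ip hip; ring.
rewrite e in h2.
have h3 : 2 * l * c <= l ^+ 2 * d by lra.
have h4 : 2 * c <= l * d.
  have : l * (2 * c) <= l * (l * d) by lra.
  by rewrite ler_pM2l.
have h5 : (c + d) * (2 * c) <= (c + d) * (l * d) by rewrite ler_pM2l.
have : (c + d) * (l * d) = c * d by rewrite /l; field; lra.
nra.
Qed.

Lemma round {R : realType} {H : lmodType R} {ip : H -> H -> R} (hip : inner_product ip)
  (eta : R) p0 p1 x z g h : 0 < eta ->
  ip (p0 - eta *: g - p1) (z - p1) <= 0 ->
  ip (p0 - eta *: h - x) (p1 - x) <= 0 ->
  eta * ip g (x - z) <= eta ^+ 2 / 2 * ip (g - h) (g - h)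
    + (ip (p0 - z) (p0 - z) - ip (p1 - z) (p1 - z)) / 2 - ip (x - p0) (x - p0) / 2.
Proof.
move=> he h1 h2.
have h3 := ipge0 hip (eta *: (g - h) - (x - p1)).
move: h1 h2 h3; ipexp hip; ipsym ip hip => h1 h2 h3.
nra.
Qed.

Lemma diam_ub {R : realType} {H : lmodType R} {ip : H -> H -> R} (C : set H) x y :
  bounded_diam ip C -> C x -> C y -> inorm ip (x - y) <= diameter ip C.
Proof.
move=> [M hM] Cx Cy; apply: ub_le_sup; last by exists x, y.
by exists M => r [a [b [Ca Cb ->]]]; apply: hM.
Qed.

Lemma ztrick {R : realType} {H : lmodType R} {ip : H -> H -> R} (hip : inner_product ip)
  (rho : R) p z z' :
  inorm ip (z' - p) <= rho -> inorm ip (z - p) <= rho ->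
  ip (p - z') (p - z') - ip (p - z) (p - z) <= 2 * rho * inorm ip (z' - z).
Proof.
move=> h1 h2.
have e : ip (p - z') (p - z') - ip (p - z) (p - z) =
   ip (z' - z) (z' - p) + ip (z' - z) (z - p).
  ipexp hip; ipsym ip hip; ring.
rewrite e.
have c1 := CS hip (z' - z) (z' - p).
have c2 := CS hip (z' - z) (z - p).
have n0 := inorm_ge0 (ip:=ip) (z' - z).
have m1 : inorm ip (z' - z) * inorm ip (z' - p) <= inorm ip (z' - z) * rho by rewrite ler_wpM2l.
have m2 : inorm ip (z' - z) * inorm ip (z - p) <= inorm ip (z' - z) * rho by rewrite ler_wpM2l.
lra.
Qed.

Lemma tele {R : realType} {H : lmodType R} {ip : H -> H -> R} (hip : inner_product ip)
  (C : set H) (xt z : nat -> H) (rho : R) (T : nat) :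
  (forall t, (1 <= t)%N -> C (xt t)) -> (forall t, (1 <= t <= T)%N -> C (z t)) ->
  (forall a b, C a -> C b -> inorm ip (a - b) <= rho) ->
  forall n, (1 <= n <= T)%N ->
  \sum_(1 <= t < n.+1) (ip (xt t - z t) (xt t - z t) - ip (xt t.+1 - z t) (xt t.+1 - z t))
   + ip (xt n.+1 - z n) (xt n.+1 - z n)
  <= rho ^+ 2 + 2 * rho * \sum_(2 <= t < n.+1) inorm ip (z t - z t.-1).
Proof.
move=> Cxt Cz hr.
have r0 : 0 <= rho.
  have := hr _ _ (Cxt 1%N isT) (Cxt 1%N isT); have := inorm_ge0 (ip:=ip) (xt 1%N - xt 1%N); lra.
have sq a b : C a -> C b -> ip (a - b) (a - b) <= rho ^+ 2.
  move=> Ca Cb; rewrite -(normsq hip); have := hr _ _ Ca Cb.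
  have := inorm_ge0 (ip:=ip) (a - b); nra.
elim=> [//|n IH] /andP[n1 nT].
case: n IH n1 nT => [|n] IH _ nT.
  rewrite big_nat1 big_geq // mulr0 addr0.
  have := sq (xt 1%N) (z 1%N) (Cxt 1%N isT) (Cz 1%N nT); lra.
have {IH} IH := IH (ltnW nT).
rewrite (big_nat_recr n.+2 1%N) // (big_nat_recr n.+2 2%N) //=.
have := ztrick hip rho (xt n.+2) (z n.+1) (z n.+2).
move=> /(_ (hr _ _ (Cz n.+2 nT) (Cxt n.+2 isT)) (hr _ _ (Cz n.+1 (ltnW nT)) (Cxt n.+2 isT))) hz.
have := ipge0 hip (xt n.+3 - z n.+2).
lra.
Qed.
Theorem lemma1 (R : realType) (H : lmodType R) (ip : H -> H -> R)
  (C : set H) (phi : nat -> H -> \bar R)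
  (eta : R) (xt x xs xh : nat -> H) :
  hilbert ip ->
  C !=set0 -> norm_closed ip C -> convex_set C -> bounded_diam ip C ->
  (forall t, (1 <= t)%N -> convex_fun (phi t)) ->
  (forall t, (1 <= t)%N -> forall y, C y -> in_dom_subdiff ip (phi t) y) ->
  0 < eta ->
  C (xt 1%N) ->
  is_proj ip C (xt 1%N - eta *: xh 1%N) (x 1%N) ->
  (forall t, (1 <= t)%N ->
     [/\ subgrad ip (phi t) (x t) (xs t),
         is_proj ip C (xt t - eta *: xs t) (xt t.+1) &
         is_proj ip C (xt t.+1 - eta *: xh t.+1) (x t.+1)]) ->
  forall (T : nat) (z : nat -> H), (1 <= T)%N ->
  (forall t, (1 <= t <= T)%N -> C (z t)) ->
  let rho := diameter ip C in
  (\sum_(1 <= t < T.+1) phi t (x t) - \sum_(1 <= t < T.+1) phi t (z t) <=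
   (rho ^+ 2 / (2 * eta)
    + rho / eta * \sum_(2 <= t < T.+1) inorm ip (z t - z t.-1)
    + eta / 2 * \sum_(1 <= t < T.+1) inorm ip (xs t - xh t) ^+ 2
    - 1 / (2 * eta) * \sum_(1 <= t < T.+1) inorm ip (x t - xt t) ^+ 2)%:E)%E.
Proof.
move=> hH Cne Ccl cC bC cvx dom he Cx1 px1 step T z T1 Cz; cbv zeta; set rho := diameter ip C.
have hip := hH.1.
have Cxt t : (1 <= t)%N -> C (xt t).
  case: t => [//|[|s]] _; first exact: Cx1.
  by case: (step s.+1 isT) => _ [] .
have px t : (1 <= t)%N -> is_proj ip C (xt t - eta *: xh t) (x t).
  case: t => [//|[|s]] _; first exact: px1.
  by case: (step s.+1 isT).
have hr a b : C a -> C b -> inorm ip (a - b) <= rho by move=> Ca Cb; apply: diam_ub.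
have finx t : (1 <= t)%N -> phi t (x t) \is a fin_num.
  by move=> t1; case: (step t t1) => [[]].
have finz t : (1 <= t <= T)%N -> phi t (z t) \is a fin_num.
  by move=> /andP[t1 tT]; case: (dom t t1 (z t) (Cz t _)) => [|s [] //]; rewrite t1.
have ex : (\sum_(1 <= t < T.+1) phi t (x t) = (\sum_(1 <= t < T.+1) fine (phi t (x t)))%:E)%E.
  rewrite -sumEFin; apply: eq_big_nat => t /andP[t1 _]; by rewrite fineK // finx.
have ez : (\sum_(1 <= t < T.+1) phi t (z t) = (\sum_(1 <= t < T.+1) fine (phi t (z t)))%:E)%E.
  rewrite -sumEFin; apply: eq_big_nat => t /andP[t1 tT]; by rewrite fineK // finz // t1.
rewrite ex ez -EFinB lee_fin.
pose W t := ip (xt t - z t) (xt t - z t) - ip (xt t.+1 - z t) (xt t.+1 - z t).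
have per t : (1 <= t <= T)%N ->
  fine (phi t (x t)) - fine (phi t (z t)) <=
  eta / 2 * inorm ip (xs t - xh t) ^+ 2 + W t / (2 * eta)
   - inorm ip (x t - xt t) ^+ 2 / (2 * eta).
  move=> /andP[t1 tT]; rewrite !(normsq hip) /W.
  case: (step t t1) => [[_ sg] pr _].
  have := sg (z t); rewrite -(fineK (finx t t1)) -(fineK (finz t _)); last by rewrite t1.
  rewrite -EFinD lee_fin => hs.
  have e : ip (xs t) (z t - x t) = - ip (xs t) (x t - z t) by ipexp hip; ring.
  rewrite e in hs.
  have v1 := VI hip _ _ _ _ cC pr (Cz t (andb_true_intro (conj t1 tT))).
  have v2 := VI hip _ _ _ _ cC (px t t1) (Cxt t.+1 isT).
  have hround := round hip eta (xt t) (xt t.+1) (x t) (z t) (xs t) (xh t) he v1 v2.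
  set q := ip (xs t) (x t - z t) in hs hround.
  have : q <= (eta ^+ 2 / 2 * ip (xs t - xh t) (xs t - xh t) +
    (ip (xt t - z t) (xt t - z t) - ip (xt t.+1 - z t) (xt t.+1 - z t)) / 2 -
    ip (x t - xt t) (x t - xt t) / 2) / eta by rewrite ler_pdivlMr // mulrC.
  have -> : (eta ^+ 2 / 2 * ip (xs t - xh t) (xs t - xh t) +
    (ip (xt t - z t) (xt t - z t) - ip (xt t.+1 - z t) (xt t.+1 - z t)) / 2 -
    ip (x t - xt t) (x t - xt t) / 2) / eta =
    eta / 2 * ip (xs t - xh t) (xs t - xh t) +
    (ip (xt t - z t) (xt t - z t) - ip (xt t.+1 - z t) (xt t.+1 - z t)) / (2 * eta) -
    ip (x t - xt t) (x t - xt t) / (2 * eta).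
    by field; rewrite gt_eqF.
  lra.
have S := @ler_sum_nat _ 1 T.+1 _ _ per.
rewrite sumrB !big_split /= sumrN -mulr_sumr -!mulr_suml in S.

have tl := tele hip C xt z rho T Cxt Cz hr T (andb_true_intro (conj T1 (leqnn T))).
have g0 := ipge0 hip (xt T.+1 - z T).
set SW := \sum_(1 <= t < T.+1) W t in S.
have SWe : SW = \sum_(1 <= i < T.+1) (ip (xt i - z i) (xt i - z i) - ip (xt i.+1 - z i) (xt i.+1 - z i)) by [].
rewrite -SWe in tl.
have ie : 0 < 2 * eta by rewrite mulr_gt0.
have m : SW / (2 * eta) <= (rho ^+ 2 + 2 * rho * \sum_(2 <= t < T.+1) inorm ip (z t - z t.-1)) / (2 * eta).
  by rewrite ler_pM2r ?invr_gt0 //; lra.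
have e2 : (rho ^+ 2 + 2 * rho * \sum_(2 <= t < T.+1) inorm ip (z t - z t.-1)) / (2 * eta) =
  rho ^+ 2 / (2 * eta) + rho / eta * \sum_(2 <= t < T.+1) inorm ip (z t - z t.-1).
  by field; rewrite gt_eqF.
rewrite e2 in m.
have -> : 1 / (2 * eta) * \sum_(1 <= t < T.+1) inorm ip (x t - xt t) ^+ 2 =
   (\sum_(1 <= t < T.+1) inorm ip (x t - xt t) ^+ 2) / (2 * eta) by rewrite mul1r mulrC.
lra.
Qed.
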